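(* Let $V$ be the vector module of $gl(m|n)$ and $V(\Lambda)$ a finite-dimensional irreducible $gl(m|n)$-module with maximal $\mathbb{Z}$-graded component $V_0(\Lambda)$. Then $V\otimes V(\Lambda)$ is cyclically generated as an $L$-module by the $L_0$-submodule $V\otimes V_0(\Lambda)$, and $V\otimes V(\Lambda)=U(L_-)\,\big(V\otimes V_0(\Lambda)\big)$.
   Context: $L=gl(m|n)$ over $\mathbb{C}$, with homogeneous basis $E_{pq}$ ($1\le p,q\le m+n$), parity $(p)+(q)$ where $(p)=0$ for $p\le m$, $(p)=1$ otherwise, and graded bracket $[E_{pq},E_{rs}]=\delta_{qr}E_{ps}-(-1)^{((p)+(q))((r)+(s))}\delta_{ps}E_{rq}$. $L$ has the $\mathbb{Z}$-grading $L=L_-\oplus L_0\oplus L_+$ with $L_0=gl(m)\oplus gl(n)$ the even part, $L_+=\mathrm{span}\{E_{pq}:p\le m<q\}$, $L_-=\mathrm{span}\{E_{qp}:p\le m<q\}$. The vector module $V$ has basis $|s\rangle$ with $E_{pq}|s\rangle=\delta_{qs}|p\rangle$, and $L$ acts on tensor products via the coproduct $\Delta(x)=x\otimes1+1\otimes x$ with the usual sign rule. The maximal $\mathbb{Z}$-graded component $V_0(\Lambda)$ of $V(\Lambda)$ is the irreducible $L_0$-submodule generated by the highest weight vector (it is annihilated by $L_+$). *)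

(* Defs.v *)
From HB Require Import structures.
From mathcomp Require Import all_boot all_order all_algebra.

Set Implicit Arguments. Unset Strict Implicit. Unset Printing Implicit Defensive.
Import Order.TTheory GRing.Theory Num.Theory.
Local Open Scope ring_scope.

Definition par (m n : nat) (p : 'I_(m + n)) : bool := (m <= p)%N.

Definition epar (m n : nat) (p q : 'I_(m + n)) : bool := par p (+) par q.

Definition sgn (F : pzRingType) (b : bool) : F := if b then -1 else 1.

Definition inL0 (m n : nat) (p q : 'I_(m + n)) : bool := par p == par q.
Definition inLplus (m n : nat) (p q : 'I_(m + n)) : bool := ~~ par p && par q.
Definition inLminus (m n : nat) (p q : 'I_(m + n)) : bool := par p && ~~ par q.

(* ---------- finite-dimensional gl(m|n)-supermodules ----------
   A d-dimensional module is given by a homogeneous basis e_0..e_(d-1) of parities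
   pw : 'I_d -> bool, and the matrices rho p q : 'M_d of the action of E_pq
   on column vectors ('cV_d). *)
Definition is_glrep (F : fieldType) (m n d : nat) (pw : 'I_d -> bool)
    (rho : 'I_(m + n) -> 'I_(m + n) -> 'M[F]_d) : Prop :=
  (forall p q i j, pw i (+) pw j != epar p q -> rho p q i j = 0) /\
  (forall p q r s,
     rho p q *m rho r s - sgn F (epar p q && epar r s) *: (rho r s *m rho p q) =
     (q == r)%:R *: rho p s
       - (sgn F (epar p q && epar r s) * (p == s)%:R) *: rho r q).

Definition evenpart (F : fieldType) (d : nat) (pw : 'I_d -> bool) (v : 'cV[F]_d)
  : 'cV[F]_d := \col_i (if pw i then 0 else v i 0).

Definition graded_subspace (F : fieldType) (d : nat) (pw : 'I_d -> bool)
    (U : {vspace 'cV[F]_d}) : Prop :=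
  forall v, v \in U -> evenpart pw v \in U.

Definition stable_subspace (F : fieldType) (m n d : nat)
    (rho : 'I_(m + n) -> 'I_(m + n) -> 'M[F]_d) (U : {vspace 'cV[F]_d}) : Prop :=
  forall p q v, v \in U -> rho p q *m v \in U.

Definition irreducible_glrep (F : fieldType) (m n d : nat) (pw : 'I_d -> bool)
    (rho : 'I_(m + n) -> 'I_(m + n) -> 'M[F]_d) : Prop :=
  (0 < d)%N /\
  forall U : {vspace 'cV[F]_d}, graded_subspace pw U -> stable_subspace rho U ->
    U = 0%VS \/ U = fullv.

Definition highest_weight_vector (F : fieldType) (m n d : nat)
    (rho : 'I_(m + n) -> 'I_(m + n) -> 'M[F]_d) (v : 'cV[F]_d) : Prop :=
  v != 0 /\
  (forall p, exists c : F, rho p p *m v = c *: v) /\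
  (forall p q : 'I_(m + n), (p < q)%N -> rho p q *m v = 0).

(* V_0(Lambda): the L_0-submodule generated by the highest weight vector v,
   i.e. the smallest subspace containing v and stable under all E_pq in L_0. *)
Definition inV0 (F : fieldType) (m n d : nat)
    (rho : 'I_(m + n) -> 'I_(m + n) -> 'M[F]_d) (v w : 'cV[F]_d) : Prop :=
  forall U : {vspace 'cV[F]_d}, v \in U ->
    (forall p q u, inL0 p q -> u \in U -> rho p q *m u \in U) -> w \in U.

(* ---------- the tensor product V (x) W ----------
   An element sum_(s,j) X s j |s> (x) e_j of V (x) W is encoded by the matrix
   X : 'M_(m+n, d).  The coproduct with the sign rule gives
     E_pq (|s> (x) w) = (E_pq|s>) (x) w + (-1)^(((p)+(q))(s)) |s> (x) rho(E_pq) w,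
   with E_pq|s> = delta_qs |p>, i.e. X |-> delta_mx p q *m X + D *m X *m (rho p q)^T
   where D is the diagonal sign matrix. *)
Definition tens_act (F : fieldType) (m n d : nat)
    (rho : 'I_(m + n) -> 'I_(m + n) -> 'M[F]_d) (p q : 'I_(m + n))
    (X : 'M[F]_(m + n, d)) : 'M[F]_(m + n, d) :=
  delta_mx p q *m X
  + diag_mx (\row_s sgn F (epar p q && par s)) *m X *m (rho p q)^T.

Definition in_V_tens_V0 (F : fieldType) (m n d : nat)
    (rho : 'I_(m + n) -> 'I_(m + n) -> 'M[F]_d) (v : 'cV[F]_d)
    (X : 'M[F]_(m + n, d)) : Prop :=
  forall s : 'I_(m + n), inV0 rho v (row s X)^T.

(* the subspace U(A)S of V (x) W, A given by a predicate on basis indices,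
   is the smallest subspace containing S and stable under the E_pq in A;
   "U(A)S is everything" says: every such subspace is the whole space. *)
Definition generates (F : fieldType) (m n d : nat)
    (rho : 'I_(m + n) -> 'I_(m + n) -> 'M[F]_d)
    (A : 'I_(m + n) -> 'I_(m + n) -> bool) (S : 'M[F]_(m + n, d) -> Prop) : Prop :=
  forall U : {vspace 'M[F]_(m + n, d)},
    (forall X, S X -> X \in U) ->
    (forall p q X, A p q -> X \in U -> tens_act rho p q X \in U) ->
    U = fullv.

(* Main.v *)
Require Import Defs.
From HB Require Import structures.
From mathcomp Require Import all_boot all_order all_algebra.
From mathcomp Require Import reals complex.
From Stdlib Require Import Classical.
Set Implicit Arguments. Unset Strict Implicit. Unset Printing Implicit Defensive.
Import Order.TTheory GRing.Theory Num.Theory.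
Local Open Scope ring_scope.

Section Closure.
Variables (F : fieldType) (N d : nat) (ops : 'I_N -> 'I_N -> 'M[F]_d).

Definition stab (Q : 'I_N -> 'I_N -> bool) (C : {vspace 'cV[F]_d}) :=
  forall p q w, Q p q -> w \in C -> ops p q *m w \in C.
Definition smallest Q (S C : {vspace 'cV[F]_d}) :=
  [/\ (S <= C)%VS, stab Q C & forall D, (S <= D)%VS -> stab Q D -> (C <= D)%VS].

Lemma stab_cap Q C D : stab Q C -> stab Q D -> stab Q (C :&: D)%VS.
Proof.
move=> hC hD p q w hq /memv_capP[wC wD]; apply/memv_capP; split.
  exact: hC. exact: hD.
Qed.

Lemma ex_smallest Q S : exists C, smallest Q S C.
Proof.
suff H: forall k (C : {vspace 'cV[F]_d}), (\dim C < k)%N -> (S <= C)%VS -> stab Q C ->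
   exists C, smallest Q S C.
  apply: (H (\dim (fullv : {vspace 'cV[F]_d})).+1 fullv) => //; first exact: subvf.
  by move=> p q w _ _; apply: memvf.
elim=> [//|k IH] C hdim hS hC.
case: (classic (exists D, [/\ (S <= D)%VS, stab Q D & ~~ (C <= D)%VS])).
  case=> D [hSD hD nCD].
  apply: (IH (C :&: D)%VS); last exact: stab_cap.
    have := dimv_leqif_eq (capvSl C D).
    case=> le eqi.
    have ne: (C :&: D)%VS != C.
      apply/negP=> /eqP e; move: nCD; rewrite -e; by rewrite capvSr.
    have : \dim (C :&: D)%VS != \dim C by rewrite eqi.
    move=> ne2; have lt: (\dim (C :&: D)%VS < \dim C)%N by rewrite ltn_neqAle ne2 le.
    by apply: leq_trans lt _; rewrite -ltnS.
  by rewrite subv_cap hS hSD.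
move=> Hn; exists C; split=> // D hSD hD.
apply/negPn/negP=> nCD; apply: Hn; by exists D.
Qed.
End Closure.
From mathcomp Require Import ring lra.
Section Rep.
Variables (F : numClosedFieldType) (m n d : nat) (pw : 'I_d -> bool)
  (rho : 'I_(m + n) -> 'I_(m + n) -> 'M[F]_d).
Hypothesis Hrep : is_glrep pw rho.

Local Notation Idx := 'I_(m + n).
Local Notation vs := {vspace 'cV[F]_d}.

Lemma rho_comm p q r s : rho p q *m rho r s =
  sgn F (epar p q && epar r s) *: (rho r s *m rho p q) + (q == r)%:R *: rho p s
  - (sgn F (epar p q && epar r s) * (p == s)%:R) *: rho r q.
Proof. by case: Hrep => _ H; rewrite -addrA -H addrC subrK. Qed.

Lemma comm_mem (C : vs) p q r s w :
  rho r s *m (rho p q *m w) \in C ->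
  (q == r -> rho p s *m w \in C) -> (p == s -> rho r q *m w \in C) ->
  rho p q *m (rho r s *m w) \in C.
Proof.
move=> h1 h2 h3; rewrite mulmxA rho_comm mulmxBl mulmxDl -!scalemxAl -!mulmxA.
apply: memvB; first apply: memvD; first exact: memvZ.
  case: (q =P r) h2 => [e h2|_ _]; last by rewrite scale0r mem0v.
  by apply: memvZ; apply: h2; apply/eqP.
case: (p =P s) h3 => [e h3|_ _]; last by rewrite mulr0 scale0r mem0v.
by apply: memvZ; apply: h3; apply/eqP.
Qed.

Definition pre (A : 'M[F]_d) (C : vs) : vs := (linfun (mulmx A) @^-1: C)%VS.
Lemma mem_pre A C w : (w \in pre A C) = (A *m w \in C).
Proof. by rewrite /pre -memv_preim lfunE. Qed.

Lemma mem_bigcap (I : finType) (P : pred I) (Us : I -> vs) w :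
  (w \in \bigcap_(i | P i) Us i)%VS <-> (forall i, P i -> w \in Us i).
Proof.
rewrite memvE; split => [/subv_bigcapP h i Pi| h]; first by rewrite memvE h.
by apply/subv_bigcapP => i Pi; rewrite -memvE h.
Qed.

Lemma sub_line (C : vs) w : w \in C -> (<[w]> <= C)%VS.
Proof. by rewrite memvE. Qed.

Definition Pm : 'M[F]_d := diag_mx (\row_i sgn F (pw i)).

Lemma sgn_mul a b : sgn F a * sgn F b = sgn F (a (+) b).
Proof. by case: a; case: b; rewrite /sgn /= ?mulr1 ?mul1r ?mulrNN ?mulr1. Qed.

Lemma sgn_sq a : sgn F a * sgn F a = 1.
Proof. by rewrite sgn_mul addbb. Qed.

Lemma Pm_rho p q : Pm *m rho p q = sgn F (epar p q) *: (rho p q *m Pm).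
Proof.
apply/matrixP=> i j; rewrite mul_diag_mx mul_mx_diag !mxE.
case: Hrep => H _.
case e: (pw i (+) pw j != epar p q); first by rewrite (H _ _ _ _ e) ?mulr0 ?mul0r ?mulr0.
move/negbFE/eqP: e => <-.
rewrite -sgn_mul.
have -> : sgn F (pw i) * sgn F (pw j) * (rho p q i j * sgn F (pw j)) =
  sgn F (pw i) * rho p q i j * (sgn F (pw j) * sgn F (pw j)) by ring.
by rewrite sgn_sq mulr1.
Qed.

Lemma Pm2 : Pm *m Pm = 1%:M.
Proof.
apply/matrixP=> i j; rewrite mul_diag_mx !mxE.
by case: eqP => [->|_]; rewrite ?sgn_sq ?mulr0 ?mulr1n ?mulr0n.
Qed.

Lemma rho_Pm p q (w : 'cV[F]_d) : rho p q *m (Pm *m w) = sgn F (epar p q) *: (Pm *m (rho p q *m w)).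
Proof.
by rewrite !mulmxA Pm_rho -scalemxAl scalerA sgn_sq scale1r.
Qed.

Lemma evenpartE w : evenpart pw w = 2^-1 *: (w + Pm *m w).
Proof.
apply/matrixP=> i j; rewrite mul_diag_mx !mxE (ord1 j).
case: (pw i); rewrite /sgn ?mulN1r ?mul1r ?subrr ?mulr0 //.
have h2 : (2 : F) != 0 by rewrite pnatr_eq0.
by field.

Qed.

Lemma Pm_rho_w p q (w : 'cV[F]_d) :
  Pm *m (rho p q *m w) = sgn F (epar p q) *: (rho p q *m (Pm *m w)).
Proof. by rewrite rho_Pm scalerA sgn_sq scale1r. Qed.

Definition Hm : 'M[F]_d := \sum_(r : Idx) (r : nat)%:R *: rho r r.

Lemma sum_delta (p : Idx) : \sum_(r : Idx) (r : nat)%:R * (r == p)%:R = (p : nat)%:R :> F.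
Proof.
rewrite (bigD1 p) //= eqxx mulr1 big1 ?addr0 // => r /negbTE ->.
by rewrite mulr0.
Qed.

Lemma Hm_comm p q :
  Hm *m rho p q = rho p q *m Hm + ((p : nat)%:R - (q : nat)%:R) *: rho p q.
Proof.
have e r : rho r r *m rho p q =
   rho p q *m rho r r + ((r == p)%:R - (r == q)%:R) *: rho p q.
  rewrite rho_comm /epar addbb /= /sgn scale1r mul1r -addrA scalerBl.
  congr (_ + (_ - _)).
    by case: (r =P p) => [->|_]; rewrite ?scale0r.
  by case: (r =P q) => [->|_]; rewrite ?scale0r.
rewrite /Hm mulmx_suml.
under eq_bigr do rewrite -scalemxAl e scalerDr scalerA.
rewrite big_split /= mulmx_sumr -scaler_suml.
congr (_ + _); first by apply: eq_bigr => r _; rewrite scalemxAr.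
congr (_ *: _).
under eq_bigr do rewrite mulrBr.
by rewrite sumrB !sum_delta.
Qed.

Lemma Hm_w (w : 'cV[F]_d) (a : Idx -> F) :
  (forall r, rho r r *m w = a r *: w) ->
  Hm *m w = (\sum_(r : Idx) (r : nat)%:R * a r) *: w.
Proof.
move=> h; rewrite /Hm mulmx_suml scaler_suml; apply: eq_bigr => r _.
by rewrite -scalemxAl h scalerA.
Qed.

Definition Esp (mu : F) : {vspace 'cV[F]_d} := lker (linfun (mulmx (Hm - mu%:M))).

Lemma memE mu w : (w \in Esp mu) = (Hm *m w == mu *: w).
Proof. by rewrite memv_ker lfunE /= mulmxBl mul_scalar_mx subr_eq0. Qed.

Lemma E_low mu w p q : w \in Esp mu ->
  rho p q *m w \in Esp (mu + ((p : nat)%:R - (q : nat)%:R)).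
Proof.
rewrite !memE => /eqP h; apply/eqP.
by rewrite mulmxA Hm_comm mulmxDl -mulmxA h -scalemxAr -scalemxAl [RHS]scalerDl.
Qed.

Definition sroots : seq F := sval (closed_field_poly_normal (char_poly Hm^T)).

Lemma inS mu w : w \in Esp mu -> w != 0 -> mu \in sroots.
Proof.
move=> hw nz.
have: eigenvalue Hm^T mu.
  apply/eigenvalueP; exists w^T; last by rewrite trmx_eq0.
  by rewrite -trmx_mul; move: hw; rewrite memE => /eqP ->; rewrite linearZ.
rewrite eigenvalue_root_char /sroots; case: closed_field_poly_normal => r /= ->.
rewrite (monicP (char_poly_monic _)) scale1r.
by rewrite root_prod_XsubC.
Qed.

Lemma memsumE t r w : r \in t -> w \in Esp r -> w \in (\sum_(r <- t) Esp r)%VS.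
Proof.
elim: t => //= a t IH; rewrite inE big_cons => /orP[/eqP<-|h] hw.
  by rewrite -[w]addr0; apply: memv_add hw (mem0v _).
by rewrite -[w]add0r; apply: memv_add (mem0v _) (IH h hw).
Qed.

Lemma sumE_H t w : w \in (\sum_(r <- t) Esp r)%VS -> Hm *m w \in (\sum_(r <- t) Esp r)%VS.
Proof.
elim: t w => [|a t IH] w; rewrite ?big_nil ?big_cons.
  by rewrite memv0 => /eqP->; rewrite mulmx0 mem0v.
move/memv_addP => [x hx [z hz ->]]; rewrite mulmxDr; apply: memv_add (IH _ hz).
by move: (hx); rewrite memE => /eqP->; apply: memvZ.
Qed.

Lemma Z_indep c t y : c \notin t -> y \in (\sum_(r <- t) Esp r)%VS -> y \in Esp c -> y = 0.
Proof.
elim: t y => [|a t IH] y; rewrite ?big_nil ?big_cons.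
  by move=> _; rewrite memv0 => /eqP.
rewrite inE negb_or => /andP[nca nct] /memv_addP[x hx [z hz ->]] hyc.
have key : (c - a) *: (x + z) = (Hm - a%:M) *m z.
  move: hx hyc; rewrite !memE => /eqP hx /eqP hy.
  rewrite scalerBl -hy -mul_scalar_mx -mulmxBl mulmxDr.
  by rewrite mulmxBl mul_scalar_mx hx subrr add0r.
have : (c - a) *: (x + z) = 0.
  apply: IH => //; last by apply: memvZ.
  by rewrite key mulmxBl mul_scalar_mx; apply: memvB; [apply: sumE_H | apply: memvZ].
by move/eqP; rewrite scaler_eq0 subr_eq0 (negbTE nca) => /eqP.
Qed.

Variables (v : 'cV[F]_d) (cw : Idx -> F) (eps : F).
Hypothesis Hv0 : v != 0.
Hypothesis Hcw : forall r, rho r r *m v = cw r *: v.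
Hypothesis Hup : forall p q : Idx, (p < q)%N -> rho p q *m v = 0.
Hypothesis Heps : eps * eps = 1.
Definition u := v + eps *: (Pm *m v).
Hypothesis Hu0 : u != 0.

Definition cc := \sum_(r : Idx) (r : nat)%:R * cw r.

Lemma Hcu r : rho r r *m u = cw r *: u.
Proof.
rewrite /u mulmxDr -scalemxAr rho_Pm /epar addbb /= /sgn scale1r Hcw.
by rewrite -scalemxAr scalerDr !scalerA mulrC.
Qed.

Lemma Hupu (p q : Idx) : (p < q)%N -> rho p q *m u = 0.
Proof.
by move=> h; rewrite /u mulmxDr -scalemxAr rho_Pm Hup // mulmx0 !scaler0 addr0.
Qed.

Lemma Pm_u : Pm *m u = eps *: u.
Proof.
rewrite /u mulmxDr -scalemxAr mulmxA Pm2 mul1mx scalerDr scalerA Heps scale1r.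
by rewrite addrC.
Qed.

Lemma vE : v \in Esp cc.
Proof. by rewrite memE (Hm_w Hcw). Qed.
Lemma uE : u \in Esp cc.
Proof. by rewrite memE (Hm_w Hcu). Qed.

Definition Zs := (\sum_(r <- [seq r <- sroots | cc < r]) Esp r)%VS.

Lemma lowZ mu w (p q : Idx) : (q < p)%N -> cc <= mu -> w \in Esp mu -> rho p q *m w \in Zs.
Proof.
move=> hq hmu hw; have hE := E_low p q hw.
have [->|nz] := eqVneq (rho p q *m w) 0; first exact: mem0v.
have hin : mu + ((p : nat)%:R - (q : nat)%:R) \in [seq r <- sroots | cc < r].
  rewrite mem_filter (inS hE nz) andbT.
  by apply: (le_lt_trans hmu); rewrite ltrDl subr_gt0 ltr_nat.
exact: memsumE hin hE.
Qed.

Lemma Z_stab_gen (p q : Idx) t : (q < p)%N -> (forall r, r \in t -> cc <= r) ->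
  forall w, w \in (\sum_(r <- t) Esp r)%VS -> rho p q *m w \in Zs.
Proof.
move=> hq; elim: t => [|a t IH] ht w; rewrite ?big_nil ?big_cons.
  by rewrite memv0 => /eqP->; rewrite mulmx0 mem0v.
move/memv_addP => [x hx [z hz ->]]; rewrite mulmxDr; apply: memvD.
  by apply: lowZ hq _ hx; apply: ht; rewrite inE eqxx.
by apply: IH hz => r hr; apply: ht; rewrite inE hr orbT.
Qed.

Lemma Z_stab : stab rho (fun p q => (q < p)%N) Zs.
Proof.
move=> p q w hq hw.
have ht : forall r, r \in [seq r <- sroots | cc < r] -> cc <= r.
  by move=> r; rewrite mem_filter => /andP[/ltW].
exact: (Z_stab_gen hq ht hw).
Qed.
Hypothesis Hirr : irreducible_glrep pw rho.

Lemma N_all N : smallest rho (fun p q => (q < p)%N) <[u]>%VS N ->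
  forall a b w, w \in N -> rho a b *m w \in N.
Proof.
move=> [hS hN hmin].
have uN : u \in N by rewrite memvE.
have cart r w : w \in N -> rho r r *m w \in N.
  move=> hw.
  have sub : (N <= N :&: pre (rho r r) N)%VS.
    apply: hmin.
      by apply: sub_line; rewrite memv_cap uN mem_pre Hcu memvZ.
    move=> p q x hq /memv_capP[xN]; rewrite mem_pre => rxN.
    rewrite memv_cap hN // mem_pre.
    apply: comm_mem; first exact: hN.
      by move/eqP=> ->; apply: hN.
    by move/eqP=> ->; apply: hN.
  by move: (subvP sub w hw); rewrite memv_cap mem_pre => /andP[].
pose Dr := (N :&: \bigcap_(pq : Idx * Idx | (pq.1 < pq.2)%N) pre (rho pq.1 pq.2) N)%VS.
have allN w : w \in Dr -> forall a b, rho a b *m w \in N.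
  move=> /memv_capP[wN /mem_bigcap hB] a b.
  case: (ltngtP a b) => h.
  - by have := hB (a, b) h; rewrite mem_pre.
  - exact: hN.
  - by have e := ord_inj h; subst b; apply: cart.
have sub : (N <= Dr)%VS.
  apply: hmin.
    apply: sub_line; rewrite memv_cap uN /=; apply/mem_bigcap => -[a b] /= h.
    by rewrite mem_pre Hupu // mem0v.
  move=> p q x hq hx; rewrite memv_cap (allN _ hx p q) /=.
  apply/mem_bigcap => -[a b] /= hab; rewrite mem_pre.
  apply: comm_mem; first exact: (hN _ _ _ hq (allN _ hx a b)).
    by move=> _; apply: allN.
  by move=> _; apply: allN.
by move=> a b w hw; apply: allN; apply: (subvP sub).
Qed.

Lemma N_full N : smallest rho (fun p q => (q < p)%N) <[u]>%VS N -> N = fullv.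
Proof.
move=> hsm; have all := N_all hsm; case: hsm => [hS hN hmin].
have uN : u \in N by rewrite memvE.
have gr : (N <= N :&: pre Pm N)%VS.
  apply: hmin.
    by apply: sub_line; rewrite memv_cap uN mem_pre Pm_u memvZ.
  move=> p q x hq /memv_capP[xN]; rewrite mem_pre => pxN.
  by rewrite memv_cap hN // mem_pre Pm_rho_w memvZ // hN.
case: Hirr => _ Hi; case: (Hi N).
- move=> w hw; rewrite evenpartE; apply: memvZ; apply: memvD => //.
  by move: (subvP gr w hw); rewrite memv_cap mem_pre => /andP[].
- by move=> p q w hw; apply: all.
- by move=> N0; move: uN Hu0; rewrite N0 memv0 => ->.
- by [].
Qed.

Lemma v_line : exists k, v = k *: u.
Proof.
have [N hsm] := ex_smallest rho (fun p q => (q < p)%N) <[u]>%VS.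
have hfull := N_full hsm; case: hsm => [hS hN hmin].
have sub : (N <= <[u]> + Zs)%VS.
  apply: hmin; first exact: addvSl.
  move=> p q x hq /memv_addP[a /vlineP[k ->] [z hz ->]].
  rewrite mulmxDr -scalemxAr -[X in X \in _]add0r; apply: memv_add; first exact: mem0v.
  apply: memvD; last exact: Z_stab.
  by apply: memvZ; apply: lowZ hq _ uE.
have : v \in (<[u]> + Zs)%VS by apply: (subvP sub); rewrite hfull memvf.
move/memv_addP => [a /vlineP[k ->] [z hz ev]]; exists k.
have z0 : z = 0.
  apply: (Z_indep (c := cc) (t := [seq r <- sroots | cc < r])) => //.
    by rewrite mem_filter ltxx.
  have -> : z = v - k *: u by rewrite ev addrC addKr.
  by apply: memvB; [exact: vE | apply: memvZ; exact: uE].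
by rewrite ev z0 addr0.
Qed.
Lemma plus_lt (a b : Idx) : inLplus a b -> (a < b)%N.
Proof.
rewrite /inLplus /par => /andP[]; rewrite -ltnNge => h1 h2.
exact: leq_trans h1 h2.
Qed.

Lemma pc1 (a b r s : Idx) : inLplus a b -> inL0 r s -> b = r -> inLplus a s.
Proof. move=> h1 h2 e; subst; move: h1 h2; rewrite /inLplus /inL0.
by case: (par a); case: (par r); case: (par s). Qed.
Lemma pc2 (a b r s : Idx) : inLplus a b -> inL0 r s -> a = s -> inLplus r b.
Proof. move=> h1 h2 e; subst; move: h1 h2; rewrite /inLplus /inL0.
by case: (par b); case: (par r); case: (par s). Qed.
Lemma pc3 (p q r s : Idx) : inL0 p q -> inLminus r s -> q = r -> inLminus p s.
Proof. move=> h1 h2 e; subst; move: h1 h2; rewrite /inLminus /inL0.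
by case: (par p); case: (par r); case: (par s). Qed.
Lemma pc4 (p q r s : Idx) : inL0 p q -> inLminus r s -> p = s -> inLminus r q.
Proof. move=> h1 h2 e; subst; move: h1 h2; rewrite /inLminus /inL0.
by case: (par q); case: (par r); case: (par s). Qed.
Lemma pc5 (p q r s : Idx) : inLplus p q -> inLminus r s -> q = r -> inL0 p s.
Proof. move=> h1 h2 e; subst; move: h1 h2; rewrite /inLminus /inLplus /inL0.
by case: (par p); case: (par r); case: (par s). Qed.
Lemma pc6 (p q r s : Idx) : inLplus p q -> inLminus r s -> p = s -> inL0 r q.
Proof. move=> h1 h2 e; subst; move: h1 h2; rewrite /inLminus /inLplus /inL0.
by case: (par q); case: (par r); case: (par s). Qed.
Lemma pcall (p q : Idx) : [|| inL0 p q, inLplus p q | inLminus p q].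
Proof. by rewrite /inLminus /inLplus /inL0; case: (par p); case: (par q). Qed.

Lemma M_full V0 M : smallest rho (@inL0 m n) <[v]>%VS V0 ->
  smallest rho (@inLminus m n) V0 M -> M = fullv.
Proof.
move=> [hS0 hV0 hmin0] [hS hM hmin].
pose Zp := (\bigcap_(pq : Idx * Idx | inLplus pq.1 pq.2) pre (rho pq.1 pq.2) 0)%VS.
have memZp w : w \in Zp -> forall a b, inLplus a b -> rho a b *m w = 0.
  by move/mem_bigcap=> h a b hab; have := h (a, b) hab; rewrite mem_pre memv0 => /eqP.
have V0Zp : (V0 <= Zp)%VS.
  apply: hmin0.
    apply: sub_line; apply/mem_bigcap => -[a b] /= h.
    by rewrite mem_pre Hup ?mem0v // plus_lt.
  move=> r s x hrs hx; apply/mem_bigcap => -[a b] /= hab; rewrite mem_pre.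
  apply: comm_mem.
  - by rewrite (memZp _ hx _ _ hab) mulmx0 mem0v.
  - by move/eqP=> e; rewrite (memZp _ hx) ?mem0v // (pc1 hab hrs e).
  - by move/eqP=> e; rewrite (memZp _ hx) ?mem0v // (pc2 hab hrs e).
have V0M w : w \in V0 -> w \in M by move=> hw; apply: (subvP hS).
have M0 p q w : inL0 p q -> w \in M -> rho p q *m w \in M.
  move=> hpq hw.
  have sub : (M <= M :&: pre (rho p q) M)%VS.
    apply: hmin.
      by apply/subvP => x hx; rewrite memv_cap V0M // mem_pre V0M // hV0.
    move=> r s x hrs /memv_capP[xM]; rewrite mem_pre => pxM.
    rewrite memv_cap hM // mem_pre.
    apply: comm_mem; first exact: hM.
      by move/eqP=> e; apply: hM => //; apply: (pc3 hpq hrs e).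
    by move/eqP=> e; apply: hM => //; apply: (pc4 hpq hrs e).
  by move: (subvP sub w hw); rewrite memv_cap mem_pre => /andP[].
have Mp p q w : inLplus p q -> w \in M -> rho p q *m w \in M.
  move=> hpq hw.
  have sub : (M <= M :&: pre (rho p q) M)%VS.
    apply: hmin.
      apply/subvP => x hx; rewrite memv_cap V0M // mem_pre.
      by rewrite (memZp _ (subvP V0Zp _ hx)) // mem0v.
    move=> r s x hrs /memv_capP[xM]; rewrite mem_pre => pxM.
    rewrite memv_cap hM // mem_pre.
    apply: comm_mem; first exact: hM.
      by move/eqP=> e; apply: M0 => //; apply: (pc5 hpq hrs e).
    by move/eqP=> e; apply: M0 => //; apply: (pc6 hpq hrs e).
  by move: (subvP sub w hw); rewrite memv_cap mem_pre => /andP[].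
have Mall p q w : w \in M -> rho p q *m w \in M.
  by move=> hw; case/or3P: (pcall p q) => h; [exact: M0 | exact: Mp | exact: hM].
have [k vk] := v_line.
have k0 : k != 0 by apply: contraNneq Hv0; rewrite vk => ->; rewrite scale0r.
have uM : u \in M.
  have -> : u = k^-1 *: v by rewrite vk scalerA mulVf // scale1r.
  by apply: memvZ; apply: V0M; apply: (subvP hS0); exact: memv_line.
have [N hsm] := ex_smallest rho (fun p q => (q < p)%N) <[u]>%VS.
have NM : (N <= M)%VS.
  case: hsm => _ _ hminN; apply: hminN; first exact: sub_line.
  by move=> p q w _ hw; apply: Mall.
by apply/eqP; rewrite eqEsubv subvf /= -(N_full hsm).
Qed.

End Rep.
Section Tens.
Variables (F : numClosedFieldType) (m n d : nat)
  (rho : 'I_(m + n) -> 'I_(m + n) -> 'M[F]_d).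
Local Notation Idx := 'I_(m + n).

Definition Tm (s : Idx) (w : 'cV[F]_d) : 'M[F]_(m + n, d) :=
  delta_mx s (0 : 'I_1) *m w^T.

Definition Tlin (s : Idx) := (linfun (mulmx (delta_mx s (0 : 'I_1) : 'M[F]_(m + n, 1)))
   \o linfun (@trmx F d 1))%VF.

Lemma TlinE s w : Tlin s w = Tm s w.
Proof. by rewrite /Tlin comp_lfunE !lfunE. Qed.

Lemma TmE s w i j : Tm s w i j = (i == s)%:R * w j 0.
Proof. by rewrite /Tm !mxE big_ord1 !mxE eqxx andbT. Qed.

Lemma rowT s' s w : (row s' (Tm s w))^T = (s' == s)%:R *: w.
Proof. by apply/matrixP=> i j; rewrite !mxE big_ord1 !mxE eqxx andbT (ord1 j). Qed.

Lemma sumT (X : 'M[F]_(m + n, d)) : X = \sum_(s : Idx) Tm s (row s X)^T.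
Proof.
apply/matrixP=> i j; rewrite summxE (bigD1 i) //= big1 ?addr0.
  by rewrite TmE eqxx mul1r !mxE.
by move=> s /negbTE ns; rewrite TmE eq_sym ns mul0r.
Qed.

Lemma tens_T p q s w : tens_act rho p q (Tm s w) =
  (q == s)%:R *: Tm p w + sgn F (epar p q && par s) *: Tm s (rho p q *m w).
Proof.
rewrite /tens_act /Tm !mulmxA mul_delta_mx_cond.
congr (_ + _).
  by case: (q == s); rewrite ?mulr1n ?scale1r ?mulr0n ?mul0mx ?scale0r.
rewrite -mulmxA -trmx_mul.
have -> : diag_mx (\row_s0 sgn F (epar p q && par s0)) *m delta_mx s (0 : 'I_1)
    = sgn F (epar p q && par s) *: delta_mx s 0.
  apply/matrixP=> i j; rewrite mul_diag_mx !mxE.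
  by case: (i =P s) => [->|_]; rewrite ?mulr0 ?andbF.
by rewrite -scalemxAl.
Qed.

Lemma mem_bigcapG (vT : vectType F) (I : finType) (P : pred I) (Us : I -> {vspace vT}) w :
  (w \in \bigcap_(i | P i) Us i)%VS <-> (forall i, P i -> w \in Us i).
Proof.
rewrite memvE; split => [/subv_bigcapP h i Pi| h]; first by rewrite memvE h.
by apply/subv_bigcapP => i Pi; rewrite -memvE h.
Qed.

End Tens.

Lemma gen_minus (F : numClosedFieldType) (m n d : nat) (pw : 'I_d -> bool)
  (rho : 'I_(m + n) -> 'I_(m + n) -> 'M[F]_d) (v : 'cV[F]_d) cw eps :
  is_glrep pw rho -> v != 0 -> (forall r, rho r r *m v = cw r *: v) ->
  (forall p q : 'I_(m + n), (p < q)%N -> rho p q *m v = 0) -> eps * eps = 1 ->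
  u pw v eps != 0 -> irreducible_glrep pw rho ->
  generates rho (@inLminus m n) (in_V_tens_V0 rho v).
Proof.
move=> Hrep Hv0 Hcw Hup Heps Hu0 Hirr U hS hA.
have [V0 hV0] := ex_smallest rho (@inL0 m n) <[v]>%VS.
have [M hM] := ex_smallest rho (@inLminus m n) V0.
have Mf := M_full Hrep Hv0 Hcw Hup Heps Hu0 Hirr hV0 hM.
pose K := (\bigcap_(s : 'I_(m + n) | true) (@Tlin F m n d s @^-1: U))%VS.
have memK w : w \in K <-> forall s, Tm s w \in U.
  rewrite /K mem_bigcapG; split=> h s; first by rewrite -TlinE memv_preim; apply: h.
  by move=> _; rewrite -memv_preim TlinE.
case: hV0 => hS0 hV0s hmin0; case: hM => hSM hMs hminM.
have sub : (M <= K)%VS.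
  apply: hminM.
    apply/subvP => w hw; apply/memK => s; apply: hS => s'.
    rewrite rowT => U' hv hst; apply: memvZ.
    apply: (subvP (hmin0 U' _ _)) hw; first exact: sub_line.
    by move=> p q x; apply: hst.
  move=> p q w hpq /memK hw; apply/memK => s.
  have e : Tm s (rho p q *m w) = sgn F (epar p q && par s) *:
      (tens_act rho p q (Tm s w) - (q == s)%:R *: Tm p w).
    by rewrite tens_T addrC addKr scalerA sgn_sq scale1r.
  rewrite e; apply: memvZ; apply: memvB; first exact: hA.
  exact: memvZ.
have hK : forall w, w \in K by move=> w; apply: (subvP sub); rewrite Mf memvf.
apply/vspaceP => X; rewrite memvf (sumT X); apply: memv_suml => s _.
exact: (proj1 (memK _) (hK _)).
Qed.

Local Open Scope complex_scope.

Theorem lemma7 (R : realType) (m n d : nat) (pw : 'I_d -> bool)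
    (rho : 'I_(m + n) -> 'I_(m + n) -> 'M[R[i]]_d) (v : 'cV[R[i]]_d) :
  is_glrep pw rho -> irreducible_glrep pw rho -> highest_weight_vector rho v ->
  generates rho (fun _ _ => true) (in_V_tens_V0 rho v) /\
  generates rho (@inLminus m n) (in_V_tens_V0 rho v).
Proof.
move=> Hrep Hirr [Hv0 [Hc Hup]].
have [cw Hcw] := fin_all_exists Hc.
pose eps : R[i] := if (v + Pm _ pw *m v != 0) then 1 else -1.
have Heps : eps * eps = 1 by rewrite /eps; case: ifP; rewrite ?mulr1 ?mulrNN ?mulr1.
have Hu0 : u pw v eps != 0.
  rewrite /u /eps; case: ifP => h; first by rewrite scale1r.
  move/negbFE: h => /eqP h; rewrite scaleN1r; apply/negP => /eqP h2.
  have : (2%:R : R[i]) *: v = 0.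
    rewrite scaler_nat mulr2n.
    have -> : v + v = (v + Pm _ pw *m v) + (v - Pm _ pw *m v) by rewrite addrACA subrr addr0.
    by rewrite h h2 addr0.
  by move/eqP; rewrite scaler_eq0 pnatr_eq0 /= (negbTE Hv0).
have G := gen_minus Hrep Hv0 Hcw Hup Heps Hu0 Hirr.
split=> //.
move=> U hS hA; apply: G hS _ => p q X _; exact: hA.
Qed.
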